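(* Let $\mu$ be a probabilistic frame for $\mathbb{R}^d$ with frame operator $S_\mu$, and let $h:\mathbb{R}^d\to\mathbb{R}^d$ be any measurable function with $\int_{\mathbb{R}^d}\|h(x)\|_2^2\,d\mu(x)<\infty$. Define $\psi_h:\mathbb{R}^d\to\mathbb{R}^d$ by $$\psi_h(x)=S_\mu^{-1}x+h(x)-\int_{\mathbb{R}^d}\langle S_\mu^{-1}x,y\rangle h(y)\,d\mu(y).$$ Then the pushforward $(\psi_h)_{\#}\mu$ is a transport dual to $\mu$, i.e. $(\psi_h)_{\#}\mu\in D_\mu$.
   Context: $P_2(\mathbb{R}^d)$ is the set of Borel probability measures $\mu$ on $\mathbb{R}^d$ with $\int\|x\|^2d\mu(x)<\infty$. A probability measure $\mu$ on $\mathbb{R}^d$ is a probabilistic frame if there exist $0<A\le B<\infty$ with $A\|x\|^2\le\int\langle x,y\rangle^2d\mu(y)\le B\|x\|^2$ for all $x\in\mathbb{R}^d$ (equivalently, $\mu\in P_2(\mathbb{R}^d)$ and the linear span of its support is $\mathbb{R}^d$). Its frame operator is the positive definite matrix $S_\mu=\int_{\mathbb{R}^d}xx^\top d\mu(x)$. For probability measures $\mu,\nu$, $\Gamma(\mu,\nu)$ denotes the set of couplings (probability measures on $\mathbb{R}^d\times\mathbb{R}^d$ with marginals $\mu$ and $\nu$). A measure $\nu\in P_2(\mathbb{R}^d)$ is a transport dual to the probabilistic frame $\mu$ if there exists $\gamma\in\Gamma(\mu,\nu)$ with $\iint xy^\top d\gamma(x,y)=I$; $D_\mu$ denotes the set of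 all transport duals to $\mu$. $T_\#\mu$ denotes the pushforward of $\mu$ by $T$. *)

(* Defs.v *)
(* R^d is modelled as d.-tuple R, which
   carries MathComp-Analysis' product (Borel) sigma-algebra generated by the
   coordinate projections. *)
From HB Require Import structures.
From mathcomp Require Import all_boot all_order all_algebra.
From mathcomp Require Import all_classical all_reals all_analysis.
Set Implicit Arguments. Unset Strict Implicit. Unset Printing Implicit Defensive.
Import Order.TTheory GRing.Theory Num.Theory.
Local Open Scope classical_set_scope.
Local Open Scope ring_scope.

Section frames.
Variables (R : realType) (d : nat).
Notation V := (d.-tuple R).

Definition dotv (x y : V) : R := \sum_(i < d) tnth x i * tnth y i.
Definition sqnorm (x : V) : R := dotv x x.

Definition tcol (x : V) : 'cV[R]_d := \col_i tnth x i.
Definition ctup (v : 'cV[R]_d) : V := [tuple v i 0 | i < d].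

Definition finite_second_moment (nu : {measure set V -> \bar R}) : Prop :=
  (\int[nu]_x (sqnorm x)%:E < +oo)%E.

Definition probabilistic_frame (mu : probability V R) : Prop :=
  exists A B : R, 0 < A /\ A <= B /\
    forall x : V,
      ((A * sqnorm x)%:E <= \int[mu]_y ((dotv x y) ^+ 2)%:E)%E /\
      (\int[mu]_y ((dotv x y) ^+ 2)%:E <= (B * sqnorm x)%:E)%E.

Definition frame_op (mu : {measure set V -> \bar R}) : 'M[R]_d :=
  \matrix_(i, j) Rintegral mu setT (fun x => tnth x i * tnth x j).

Definition psi (mu : {measure set V -> \bar R}) (h : V -> V) (x : V) : V :=
  let s := ctup (invmx (frame_op mu) *m tcol x) in
  [tuple tnth s i + tnth (h x) i
         - Rintegral mu setT (fun y => dotv s y * tnth (h y) i) | i < d].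

Definition coupling (gamma : probability (V * V)%type R)
    (mu nu : set V -> \bar R) : Prop :=
  (forall A, measurable A -> gamma (A `*` setT) = mu A) /\
  (forall B, measurable B -> gamma (setT `*` B) = nu B).

Definition transport_dual (mu : probability V R) (nu : set V -> \bar R) : Prop :=
  exists nu' : probability V R,
    (forall A, measurable A -> nu A = nu' A) /\
    finite_second_moment nu' /\
    exists gamma : probability (V * V)%type R,
      coupling gamma mu nu' /\
      \matrix_(i, j) Rintegral gamma setT (fun z => tnth z.1 i * tnth z.2 j)
        = 1%:M.

End frames.

(* Main.v *)
Require Import Defs.
From HB Require Import structures.
From mathcomp Require Import all_boot all_order all_algebra.
From mathcomp Require Import all_classical all_reals all_analysis.
From mathcomp Require Import ring lra measurable_realfun.
Import Order.TTheory GRing.Theory Num.Theory.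
Set Implicit Arguments. Unset Strict Implicit. Unset Printing Implicit Defensive.
Local Open Scope classical_set_scope.
Local Open Scope ring_scope.

Section pf.
Context d1 d2 (T1 : measurableType d1) (T2 : measurableType d2) (R : realType)
  (P : probability T1 R) (f : T1 -> T2) (mf : measurable_fun setT f).
Definition fP : f \in mfun := mem_set mf.
Definition pfP : probability T2 R := distribution P (mfun_Sub fP).
Lemma pfPE A : pfP A = P (f @^-1` A).
Proof. by []. Qed.
End pf.

Section L2.
Context dd (T : measurableType dd) (R : realType) (mu : probability T R).

Definition L2 (f : T -> R) := measurable_fun setT f /\
  mu.-integrable setT (EFin \o (fun x => f x ^+ 2)).

Lemma L2_int_mul f g : L2 f -> L2 g ->
  mu.-integrable setT (EFin \o (fun x => f x * g x)).
Proof.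
move=> [mf if2] [mg ig2].
apply: (@le_integrable _ _ _ mu setT measurableT _ (EFin \o (fun x => f x ^+ 2 + g x ^+ 2))).
- by apply/measurable_EFinP; exact: measurable_funM.
- move=> x _ /=; rewrite lee_fin (@ger0_norm _ (_ + _)); last first.
    by rewrite addr_ge0 // sqr_ge0.
  rewrite ler_norml; apply/andP; split; nra.
- apply: (eq_integrable measurableT ((EFin \o (fun x => f x ^+ 2)) \+ (EFin \o (fun x => g x ^+ 2)))).
    by move=> x _ /=; rewrite EFinD.
  exact: integrableD.
Qed.

Lemma L2_cst c : L2 (fun _ => c).
Proof.
split; first exact: measurable_cst.
exact: (finite_measure_integrable_cst mu (c ^+ 2) measurableT).
Qed.

Lemma L2_int f : L2 f -> mu.-integrable setT (EFin \o f).
Proof.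
move=> Lf; apply: (eq_integrable measurableT (EFin \o (fun x => f x * 1))).
  by move=> x _ /=; rewrite mulr1.
exact: L2_int_mul Lf (L2_cst 1).
Qed.

Lemma L2_add f g : L2 f -> L2 g -> L2 (fun x => f x + g x).
Proof.
move=> [mf if2] [mg ig2]; split; first exact: measurable_funD.
apply: (@le_integrable _ _ _ mu setT measurableT _ (EFin \o (fun x => 2 * f x ^+ 2 + 2 * g x ^+ 2))).
- by apply/measurable_EFinP; apply: measurable_funX; exact: measurable_funD.
- move=> x _ /=; rewrite lee_fin (@ger0_norm _ (_ + _)); last first.
    by rewrite addr_ge0 // mulr_ge0 // sqr_ge0.
  rewrite ger0_norm ?sqr_ge0 //; have := sqr_ge0 (f x - g x); nra.
- have i1 := integrableZl measurableT 2 if2.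
  have i2 := integrableZl measurableT 2 ig2.
  apply: (eq_integrable measurableT _ _ _ (integrableD measurableT i1 i2)).
  by move=> x _ /=; rewrite -!EFinM -EFinD.
Qed.

Lemma L2_scale k f : L2 f -> L2 (fun x => k * f x).
Proof.
move=> [mf if2]; split; first exact: measurable_funM.
apply: (eq_integrable measurableT _ _ _ (integrableZl measurableT (k ^+ 2) if2)).
by move=> x _ /=; rewrite -EFinM exprMn.
Qed.

Lemma L2_opp f : L2 f -> L2 (fun x => - f x).
Proof.
move=> Lf; have := L2_scale (-1) Lf.
by congr L2; apply: funext => x; rewrite mulN1r.
Qed.

Lemma L2_sub f g : L2 f -> L2 g -> L2 (fun x => f x - g x).
Proof. by move=> Lf Lg; apply: L2_add => //; exact: L2_opp. Qed.

Lemma L2_sum I (s : seq I) (F : I -> T -> R) : (forall i, L2 (F i)) ->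
  L2 (fun x => \sum_(i <- s) F i x).
Proof.
move=> LF; elim: s => [|a s IH].
  by under [X in L2 X]funext do rewrite big_nil; exact: L2_cst.
under [X in L2 X]funext do rewrite big_cons.
exact: L2_add.
Qed.

Lemma Rint_sum I (s : seq I) (F : I -> T -> R) :
  (forall i, mu.-integrable setT (EFin \o F i)) ->
  \int[mu]_x (\sum_(i <- s) F i x) = \sum_(i <- s) \int[mu]_x F i x.
Proof.
move=> iF; elim: s => [|a s IH].
  under eq_Rintegral do rewrite big_nil.
  by rewrite big_nil Rintegral_cst // mul0r.
under eq_Rintegral do rewrite big_cons.
rewrite RintegralD // ?IH ?big_cons //.
apply: (eq_integrable measurableT (fun x => \sum_(i <- s) (EFin \o F i) x)).
  by move=> x _ /=; rewrite -sumEFin.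
exact: integrable_sum.
Qed.

Lemma int_sum I (s : seq I) (F : I -> T -> R) :
  (forall i, mu.-integrable setT (EFin \o F i)) ->
  mu.-integrable setT (EFin \o (fun x => \sum_(i <- s) F i x)).
Proof.
move=> iF.
apply: (eq_integrable measurableT _ _ _ (integrable_sum measurableT s (P := xpredT) (fun i _ => iF i))).
by move=> x _ /=; rewrite sumEFin.
Qed.

Lemma int_scale k f : mu.-integrable setT (EFin \o f) ->
  mu.-integrable setT (EFin \o (fun x => k * f x)).
Proof.
move=> i; apply: (eq_integrable measurableT _ _ _ (integrableZl measurableT k i)).
by move=> x _ /=; rewrite EFinM.
Qed.

Lemma int_scaler k f : mu.-integrable setT (EFin \o f) ->
  mu.-integrable setT (EFin \o (fun x => f x * k)).
Proof.
move=> i; apply: (eq_integrable measurableT _ _ _ (int_scale k i)).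
by move=> x _ /=; rewrite mulrC.
Qed.

Lemma L2_scaler k f : L2 f -> L2 (fun x => f x * k).
Proof.
move=> Lf; have := L2_scale k Lf.
by congr L2; apply: funext => x; rewrite mulrC.
Qed.

End L2.

Section frame.
Context (R : realType) (d : nat) (mu : probability (d.-tuple R) R).
Notation V := (d.-tuple R).
Hypothesis fr : probabilistic_frame mu.

Lemma mcoord (i : 'I_d) : measurable_fun setT (fun y : V => tnth y i).
Proof. exact: measurable_tnth. Qed.

Lemma mdot (x : V) : measurable_fun setT (dotv x).
Proof.
rewrite /dotv; apply: measurable_sum => i.
by apply: measurable_funM => //; exact: mcoord.
Qed.

Lemma L2_dot x : L2 mu (dotv x).
Proof.
split; first exact: mdot.
have [A [B [A0 [AB Hfr]]]] := fr.
apply/integrableP; split.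
  by apply/measurable_EFinP; apply: measurable_funX; exact: mdot.
rewrite (eq_integral (fun y => (dotv x y ^+ 2)%:E)); last first.
  by move=> y _ /=; rewrite ger0_norm // sqr_ge0.
apply: (le_lt_trans (proj2 (Hfr x))).
exact: ltry.
Qed.

Definition ev (i : 'I_d) : V := [tuple ((i == j)%:R : R) | j < d].

Lemma dot_ev i y : dotv (ev i) y = tnth y i.
Proof.
rewrite /dotv (bigD1 i) //= big1 ?addr0.
  by rewrite tnth_mktuple eqxx mul1r.
by move=> j /negbTE ji; rewrite tnth_mktuple eq_sym ji mul0r.
Qed.

Lemma L2_coord i : L2 mu (fun y : V => tnth y i).
Proof.
have := L2_dot (ev i); congr L2; apply: funext => y; exact: dot_ev.
Qed.

Lemma msq : measurable_fun setT (fun y : V => sqnorm y).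
Proof.
rewrite /sqnorm /dotv; apply: measurable_sum => i.
by apply: measurable_funM; exact: mcoord.
Qed.

Lemma sqnorm_ge0 (x : V) : 0 <= sqnorm x.
Proof. by rewrite /sqnorm /dotv sumr_ge0 // => k _; rewrite -expr2 sqr_ge0. Qed.

Lemma coord_le_sqnorm (x : V) j : tnth x j ^+ 2 <= sqnorm x.
Proof.
rewrite /sqnorm /dotv (bigD1 j) //= expr2 lerDl sumr_ge0 // => k _.
by rewrite -expr2 sqr_ge0.
Qed.

Lemma L2_hcoord (h : V -> V) (mh : measurable_fun setT h)
  (ih : (\int[mu]_x (sqnorm (h x))%:E < +oo)%E) j :
  L2 mu (fun y => tnth (h y) j).
Proof.
have mhj : measurable_fun setT (fun y => tnth (h y) j).
  exact: (measurableT_comp (mcoord j) mh).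
split => //.
have msqh : measurable_fun setT (fun y => sqnorm (h y)).
  exact: (measurableT_comp msq mh).
apply: (@le_integrable _ _ _ mu setT measurableT _ (EFin \o (fun y => sqnorm (h y)))).
- by apply/measurable_EFinP; exact: measurable_funX.
- move=> x _ /=; rewrite lee_fin !ger0_norm ?sqnorm_ge0 ?sqr_ge0 //.
  exact: coord_le_sqnorm.
apply/integrableP; split; first exact/measurable_EFinP.
rewrite (eq_integral (fun y => (sqnorm (h y))%:E)) //.
by move=> y _ /=; rewrite ger0_norm // sqnorm_ge0.
Qed.

End frame.

Section main.
Context (R : realType) (d : nat) (mu : probability (d.-tuple R) R).
Notation V := (d.-tuple R).
Hypothesis fr : probabilistic_frame mu.

Let S := frame_op mu.

Lemma int_xx i k : mu.-integrable setT (EFin \o (fun y : V => tnth y i * tnth y k)).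
Proof. exact: L2_int_mul (L2_coord fr i) (L2_coord fr k). Qed.

Lemma S_sym i k : S i k = S k i.
Proof. by rewrite /S /frame_op !mxE; apply: eq_Rintegral => y _; rewrite mulrC. Qed.

Lemma vec0 (v : 'rV[R]_d) : v *m S = 0 -> v = 0.
Proof.
move=> vS.
pose w : V := [tuple v 0 k | k < d].
have e1 : \int[mu]_y (dotv w y ^+ 2) = \sum_k (v *m S) 0 k * v 0 k.
  transitivity (\int[mu]_y (\sum_i \sum_k (v 0 i * v 0 k) * (tnth y i * tnth y k))).
    apply: eq_Rintegral => y _; rewrite expr2 /dotv mulr_suml; apply: eq_bigr => i _.
    rewrite mulr_sumr; apply: eq_bigr => k _; rewrite !tnth_mktuple; ring.
  rewrite Rint_sum; last first.
    by move=> i; apply: int_sum => k; apply: int_scale; exact: int_xx.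
  rewrite (eq_bigr (fun i => \sum_k v 0 i * v 0 k * S i k)); last first.
    move=> i _; rewrite Rint_sum; last by move=> k; apply: int_scale; exact: int_xx.
    apply: eq_bigr => k _; rewrite RintegralZl //; last exact: int_xx.
    by rewrite /S /frame_op mxE.
  rewrite exchange_big /=; apply: eq_bigr => k _.
  rewrite !mxE mulr_suml; apply: eq_bigr => i _; ring.
have e0 : \int[mu]_y (dotv w y ^+ 2) = 0.
  by rewrite e1 vS big1 // => k _; rewrite mxE mul0r.
have [A [B [A0 [AB Hfr]]]] := fr.
have := proj1 (Hfr w).
have iw := (proj2 (L2_dot fr w)).
rewrite -(fineK (integrable_fin_num measurableT iw)).
rewrite -/(Rintegral mu setT (fun y => dotv w y ^+ 2)) e0 lee_fin => Hle.
have sw0 : sqnorm w = 0.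
  apply/eqP; rewrite eq_le sqnorm_ge0 andbT.
  by rewrite -(pmulr_rle0 _ A0).
apply/rowP => k; rewrite mxE.
have := coord_le_sqnorm w k; rewrite sw0 tnth_mktuple => hk.
by apply/eqP; rewrite -sqrf_eq0 eq_le hk sqr_ge0.
Qed.

Lemma S_unit : S \in unitmx.
Proof.
rewrite -row_free_unit -kermx_eq0; apply/eqP/row_matrixP => i.
by rewrite row0; apply: vec0; rewrite -row_mul mulmx_ker row0.
Qed.

Variable h : V -> V.
Hypothesis mh : measurable_fun setT h.
Hypothesis ih : (\int[mu]_x (sqnorm (h x))%:E < +oo)%E.

Let Si := invmx S.
Let C k j := \int[mu]_y (tnth y k * tnth (h y) j).

Lemma int_xh k j : mu.-integrable setT (EFin \o (fun y : V => tnth y k * tnth (h y) j)).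
Proof. exact: L2_int_mul (L2_coord fr k) (L2_hcoord mh ih j). Qed.

Lemma psiE x j : tnth (psi mu h x) j =
  \sum_l Si j l * tnth x l + tnth (h x) j
  - \sum_k (\sum_l Si k l * tnth x l) * C k j.
Proof.
have sE : forall k, tnth (ctup (invmx (frame_op mu) *m tcol x)) k = \sum_l Si k l * tnth x l.
  by move=> k; rewrite tnth_mktuple mxE; apply: eq_bigr => l _; rewrite mxE.
rewrite /psi tnth_mktuple sE; congr (_ - _).
set s := ctup _.
transitivity (\int[mu]_y (\sum_k tnth s k * (tnth y k * tnth (h y) j))).
  by apply: eq_Rintegral => y _; rewrite /dotv mulr_suml; apply: eq_bigr => k _; rewrite mulrA.
rewrite Rint_sum; last by move=> k; apply: int_scale; exact: int_xh.
apply: eq_bigr => k _; rewrite RintegralZl //; last exact: int_xh.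
by rewrite sE.
Qed.

Lemma L2_psi j : L2 mu (fun x => tnth (psi mu h x) j).
Proof.
have -> : (fun x => tnth (psi mu h x) j) = (fun x => \sum_l Si j l * tnth x l + tnth (h x) j
  - \sum_k (\sum_l Si k l * tnth x l) * C k j).
  by apply: funext => x; rewrite psiE.
apply: L2_sub; first apply: L2_add.
- by apply: L2_sum => l; apply: L2_scale; exact: L2_coord.
- exact: L2_hcoord.
- apply: L2_sum => k; apply: L2_scaler; apply: L2_sum => l; apply: L2_scale; exact: L2_coord.
Qed.

Lemma mpsi : measurable_fun setT (psi mu h).
Proof. by apply/measurable_fun_tnthP => j; exact: (proj1 (L2_psi j)). Qed.

Lemma key i j : \int[mu]_x (tnth x i * tnth (psi mu h x) j) = (i == j)%:R.
Proof.
transitivity (\int[mu]_x (\sum_l Si j l * (tnth x i * tnth x l) + tnth x i * tnth (h x) j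
  - \sum_k (\sum_l Si k l * (tnth x i * tnth x l)) * C k j)).
  apply: eq_Rintegral => x _; rewrite psiE mulrBr mulrDr mulr_sumr.
  congr (_ + _ - _).
    by apply: eq_bigr => l _; ring.
  rewrite mulr_sumr; apply: eq_bigr => k _; rewrite mulrA; congr (_ * _).
  by rewrite mulr_sumr; apply: eq_bigr => l _; ring.
have i1 : mu.-integrable setT (EFin \o (fun x : V => \sum_l Si j l * (tnth x i * tnth x l))).
  by apply: int_sum => l; apply: int_scale; exact: int_xx.
have i3 : mu.-integrable setT (EFin \o (fun x : V => \sum_k (\sum_l Si k l * (tnth x i * tnth x l)) * C k j)).
  by apply: int_sum => k; apply: int_scaler; apply: int_sum => l; apply: int_scale; exact: int_xx.
rewrite RintegralB //; last first.
  apply: (eq_integrable measurableT _ _ _ (integrableD measurableT i1 (int_xh i j))).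
  by move=> x _ /=; rewrite EFinD.
rewrite RintegralD //; last exact: int_xh.
have SiS : forall k, \int[mu]_x (\sum_l Si k l * (tnth x i * tnth x l)) = (k == i)%:R.
  move=> k; rewrite Rint_sum; last by move=> l; apply: int_scale; exact: int_xx.
  transitivity ((Si *m S) k i); last by rewrite mulVmx ?S_unit // mxE.
  rewrite mxE; apply: eq_bigr => l _; rewrite RintegralZl //; last exact: int_xx.
  by rewrite S_sym /S /frame_op mxE.
rewrite SiS Rint_sum; last first.
  by move=> k; apply: int_scaler; apply: int_sum => l; apply: int_scale; exact: int_xx.
rewrite (eq_bigr (fun k => (k == i)%:R * C k j)); last first.
  move=> k _; rewrite RintegralZr ?SiS //.
  by apply: int_sum => l; apply: int_scale; exact: int_xx.
rewrite (bigD1 i) //= eqxx mul1r big1 ?addr0; last first.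
  by move=> k /negbTE ->; rewrite mul0r.
by rewrite addrK eq_sym.
Qed.

End main.

Unset Implicit Arguments.
Set Strict Implicit.

Theorem mainTheorem1 (R : realType) (d : nat) (mu : probability (d.-tuple R) R)
    (h : d.-tuple R -> d.-tuple R) :
  probabilistic_frame mu ->
  measurable_fun setT h ->
  (\int[mu]_x (sqnorm (h x))%:E < +oo)%E ->
  transport_dual mu (pushforward mu (psi mu h)).
Proof.
move=> fr mh ih.
have mp := mpsi fr mh ih.
have mphi : measurable_fun setT (fun x : d.-tuple R => (x, psi mu h x)).
  exact: measurable_fun_pair.
exists (pfP mu mp); split; first by [].
split.
  rewrite /finite_second_moment.
  rewrite (ge0_integral_pushforward mp mu measurableT); last 2 first.
  - by apply/measurable_EFinP; exact: msq.
  - by move=> y _; rewrite lee_fin sqnorm_ge0.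
  rewrite preimage_setT.
  have iS : mu.-integrable setT (EFin \o (fun x => sqnorm (psi mu h x))).
    apply: int_sum => j /=.
    apply: (eq_integrable measurableT _ _ _ (proj2 (L2_psi fr mh ih j))).
    by move=> x _ /=; rewrite expr2.
  move/integrableP: iS => [_]; apply: le_lt_trans.
  apply: ge0_le_integral => //.
  - by move=> x _; rewrite lee_fin sqnorm_ge0.
  - by apply/measurable_EFinP; apply: measurableT_comp mp; exact: msq.
  - apply: measurableT_comp => //; apply/measurable_EFinP.
    by apply: measurableT_comp mp; exact: msq.
  - by move=> x _ /=; rewrite lee_fin ler_norm.
exists (pfP mu mphi); split.
  split => A mA; rewrite /= /pfP /distribution /pushforward /=; congr (mu _);
    apply/seteqP; split => x /=; by [case | move=> ?; split].
apply/matrixP => i j; rewrite !mxE.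
rewrite -(key fr mh ih i j) /Rintegral; congr fine.
have mf : measurable_fun setT (fun z : (d.-tuple R * d.-tuple R)%type => (tnth z.1 i * tnth z.2 j)%:E).
  apply/measurable_EFinP; apply: measurable_funM.
  + exact: (measurableT_comp (mcoord i) measurable_fst).
  + exact: (measurableT_comp (mcoord j) measurable_snd).
have intf := L2_int_mul (L2_coord fr i) (L2_psi fr mh ih j).
rewrite (integral_pushforward mphi mf) ?preimage_setT //.
Qed.
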